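(* Let $n\ge1$ and consider the map $f:\mathbb{H}\to\mathbb{H}$, $f(t)=t^n$, viewed as a map $\mathbb{R}^4\to\mathbb{R}^4$: writing $(x+\mathbf{i}y+\mathbf{j}z+\mathbf{k}w)^n=f_1+\mathbf{i}f_2+\mathbf{j}f_3+\mathbf{k}f_4$ with $f_r\in\mathbb{R}[x,y,z,w]$, set $f=(f_1,f_2,f_3,f_4)$. Then $|J(f)|\ge 0$ at every point of $\mathbb{R}^4$.
   Context: $\mathbb{H}$ is the real quaternion algebra with basis $1,\mathbf{i},\mathbf{j},\mathbf{k}$ and the usual relations; it is identified with $\mathbb{R}^4$ via $x+\mathbf{i}y+\mathbf{j}z+\mathbf{k}w\mapsto(x,y,z,w)$. A map $f:\mathbb{H}\to\mathbb{H}$ with $f=f_1+\mathbf{i}f_2+\mathbf{j}f_3+\mathbf{k}f_4$ is regarded as $(f_1,f_2,f_3,f_4):\mathbb{R}^4\to\mathbb{R}^4$; $J(f)=[\partial f_i/\partial x_j]$ with $(x_1,x_2,x_3,x_4)=(x,y,z,w)$, and $|J(f)|$ is its determinant. *)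

(* Defs.v *)
From Stdlib Require Import Reals.
Open Scope R_scope.

Record quat := Quat { qx : R; qy : R; qz : R; qw : R }.

Definition qone : quat := Quat 1 0 0 0.

(* Hamilton product (i^2 = j^2 = k^2 = ijk = -1). *)
Definition qmul (a b : quat) : quat :=
  Quat (qx a * qx b - qy a * qy b - qz a * qz b - qw a * qw b)
       (qx a * qy b + qy a * qx b + qz a * qw b - qw a * qz b)
       (qx a * qz b - qy a * qw b + qz a * qx b + qw a * qy b)
       (qx a * qw b + qy a * qz b - qz a * qy b + qw a * qx b).

Fixpoint qpow (t : quat) (n : nat) : quat :=
  match n with
  | O => qone
  | S m => qmul (qpow t m) t
  end.

Definition quat_of (p : nat -> R) : quat := Quat (p 0%nat) (p 1%nat) (p 2%nat) (p 3%nat).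

(* r-th real component (r = 0,1,2,3 for f_1..f_4). *)
Definition qcomp (r : nat) (q : quat) : R :=
  match r with
  | 0%nat => qx q | 1%nat => qy q | 2%nat => qz q | _ => qw q
  end.

Definition fpow (n r : nat) (p : nat -> R) : R := qcomp r (qpow (quat_of p) n).

Definition upd (p : nat -> R) (j : nat) (s : R) : nat -> R :=
  fun k => if Nat.eqb k j then s else p k.

Definition det3 (M : nat -> nat -> R) (a b c : nat) (d e f : nat) : R :=
    M a d * (M b e * M c f - M b f * M c e)
  - M a e * (M b d * M c f - M b f * M c d)
  + M a f * (M b d * M c e - M b e * M c d).

Definition det4 (M : nat -> nat -> R) : R :=
    M 0%nat 0%nat * det3 M 1 2 3 1 2 3
  - M 0%nat 1%nat * det3 M 1 2 3 0 2 3
  + M 0%nat 2%nat * det3 M 1 2 3 0 1 3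
  - M 0%nat 3%nat * det3 M 1 2 3 0 1 2.

(* Main.v *)
Require Import Defs.
From Stdlib Require Import Reals Lra Psatz.
Open Scope R_scope.

Fixpoint PP (n : nat) (a s : R) : R := match n with O => 1 | S m => a * PP m a s - s * QQ m a s end
with QQ (n : nat) (a s : R) : R := match n with O => 0 | S m => PP m a s + a * QQ m a s end.

Fixpoint Pa (n : nat) (a s : R) : R := match n with O => 0 | S m => PP m a s + a * Pa m a s - s * Qa m a s end
with Qa (n : nat) (a s : R) : R := match n with O => 0 | S m => Pa m a s + QQ m a s + a * Qa m a s end.

Fixpoint Ps (n : nat) (a s : R) : R := match n with O => 0 | S m => a * Ps m a s - QQ m a s - s * Qs m a s end
with Qs (n : nat) (a s : R) : R := match n with O => 0 | S m => Ps m a s + a * Qs m a s end.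

Lemma CR n a s : Pa n a s = QQ n a s + 2 * s * Qs n a s /\ 2 * Ps n a s = - Qa n a s.
Proof.
  induction n as [|n [H1 H2]]; simpl; [split; ring|].
  split.
  - rewrite H1. replace (s * Qa n a s) with (- s * (2 * Ps n a s)) by (rewrite H2; ring). ring.
  - replace (Qa n a s) with (- (2 * Ps n a s)) by lra. rewrite H1. ring.
Qed.

Lemma qpow_form n x y z w : let s := y*y + z*z + w*w in
  qpow (Quat x y z w) n = Quat (PP n x s) (QQ n x s * y) (QQ n x s * z) (QQ n x s * w).
Proof.
  intro s. induction n as [|n IH]; simpl.
  - unfold qone. f_equal; ring.
  - rewrite IH. unfold qmul; simpl. unfold s. f_equal; ring.
Qed.

Lemma dmul f g x lf lg l : derivable_pt_lim f x lf -> derivable_pt_lim g x lg ->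
  l = lf * g x + f x * lg -> derivable_pt_lim (fun u => f u * g u) x l.
Proof. intros. subst. apply (derivable_pt_lim_mult f g x lf lg); auto. Qed.
Lemma dplus f g x lf lg l : derivable_pt_lim f x lf -> derivable_pt_lim g x lg ->
  l = lf + lg -> derivable_pt_lim (fun u => f u + g u) x l.
Proof. intros. subst. apply (derivable_pt_lim_plus f g x lf lg); auto. Qed.
Lemma dminus f g x lf lg l : derivable_pt_lim f x lf -> derivable_pt_lim g x lg ->
  l = lf - lg -> derivable_pt_lim (fun u => f u - g u) x l.
Proof. intros. subst. apply (derivable_pt_lim_minus f g x lf lg); auto. Qed.
Lemma dconst c x : derivable_pt_lim (fun _ => c) x 0.
Proof. apply (derivable_pt_lim_const c x). Qed.

Lemma chain n (A S : R -> R) t da dS : derivable_pt_lim A t da -> derivable_pt_lim S t dS ->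
  derivable_pt_lim (fun u => PP n (A u) (S u)) t (Pa n (A t) (S t) * da + Ps n (A t) (S t) * dS) /\
  derivable_pt_lim (fun u => QQ n (A u) (S u)) t (Qa n (A t) (S t) * da + Qs n (A t) (S t) * dS).
Proof.
  intros HA HS. induction n as [|n [IP IQ]]; simpl.
  - split; (eapply derivable_pt_lim_ext; [| apply dconst]; intros; reflexivity) ||
      (replace (0 * da + 0 * dS) with 0 by ring; apply dconst).
  - split.
    + eapply dminus; [eapply dmul; [exact HA| exact IP| reflexivity] | eapply dmul; [exact HS| exact IQ| reflexivity] | ring].
    + eapply dplus; [exact IP | eapply dmul; [exact HA| exact IQ| reflexivity] | ring].
Qed.

Definition ee (k c : nat) : R := if Nat.eqb k c then 1 else 0.

Lemma upd_same p c k : upd p c (p c) k = p k.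
Proof. unfold upd. destruct (Nat.eqb_spec k c); subst; auto. Qed.

Lemma dupd p c k : derivable_pt_lim (fun u => upd p c u k) (p c) (ee k c).
Proof.
  unfold upd, ee. destruct (Nat.eqb k c).
  - apply derivable_pt_lim_id.
  - apply dconst.
Qed.

Definition DD (n : nat) (p : nat -> R) (r c : nat) : R :=
  let x := p 0%nat in let y := p 1%nat in let z := p 2%nat in let w := p 3%nat in
  let s := y*y + z*z + w*w in
  let dS := 2 * (y * ee 1 c + z * ee 2 c + w * ee 3 c) in
  match r with
  | O => Pa n x s * ee 0 c + Ps n x s * dS
  | _ => (Qa n x s * ee 0 c + Qs n x s * dS) * qcomp r (quat_of p) + QQ n x s * ee r c
  end.

Lemma entry n p r c : (r < 4)%nat ->
  derivable_pt_lim (fun u => fpow n r (upd p c u)) (p c) (DD n p r c).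
Proof.
  intros Hr.
  set (S := fun u => upd p c u 1%nat * upd p c u 1%nat + upd p c u 2%nat * upd p c u 2%nat
                     + upd p c u 3%nat * upd p c u 3%nat).
  assert (HS : derivable_pt_lim S (p c) (2 * (p 1%nat * ee 1 c + p 2%nat * ee 2 c + p 3%nat * ee 3 c))).
  { unfold S. eapply dplus; [eapply dplus| |].
    all: try (eapply dmul; [apply dupd | apply dupd | reflexivity]).
    all: rewrite ?upd_same; try reflexivity; ring. }
  destruct (chain n (fun u => upd p c u 0%nat) S (p c) _ _ (dupd p c 0) HS) as [HP HQ].
  assert (ES : S (p c) = p 1%nat * p 1%nat + p 2%nat * p 2%nat + p 3%nat * p 3%nat)
    by (unfold S; rewrite !upd_same; ring).
  rewrite ES, upd_same in HP, HQ.
  unfold fpow, DD.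
  destruct r as [|[|[|[|r]]]]; try lia; simpl.
  - eapply derivable_pt_lim_ext; [| exact HP].
    intro u. unfold quat_of. rewrite qpow_form. reflexivity.
  - eapply derivable_pt_lim_ext; [| eapply dmul; [exact HQ | apply (dupd p c 1) | ]].
    + intro u. unfold quat_of. rewrite qpow_form. reflexivity.
    + cbv beta. rewrite !(upd_same p c), ES. reflexivity.
  - eapply derivable_pt_lim_ext; [| eapply dmul; [exact HQ | apply (dupd p c 2) | ]].
    + intro u. unfold quat_of. rewrite qpow_form. reflexivity.
    + cbv beta. rewrite !(upd_same p c), ES. reflexivity.
  - eapply derivable_pt_lim_ext; [| eapply dmul; [exact HQ | apply (dupd p c 3) | ]].
    + intro u. unfold quat_of. rewrite qpow_form. reflexivity.
    + cbv beta. rewrite !(upd_same p c), ES. reflexivity.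
Qed.

Theorem corollary3p2 (n : nat) (hn : (1 <= n)%nat) (p : nat -> R)
  (J : nat -> nat -> R) :
  (forall r c : nat, (r < 4)%nat -> (c < 4)%nat ->
     derivable_pt_lim (fun s => fpow n r (upd p c s)) (p c) (J r c)) ->
  0 <= det4 J.
Proof.
  intros H.
  assert (HJ : forall r c, (r < 4)%nat -> (c < 4)%nat -> J r c = DD n p r c).
  { intros r c Hr Hc. eapply uniqueness_limite; [apply H; auto | apply entry; auto]. }
  unfold det4, det3. rewrite !HJ by lia.
  unfold DD, ee; simpl.
  set (x := p 0%nat); set (y := p 1%nat); set (z := p 2%nat); set (w := p 3%nat).
  set (s := y*y + z*z + w*w).
  destruct (CR n x s) as [C1 C2].
  replace (Ps n x s) with (- Qa n x s / 2) by lra.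
  rewrite C1.
  set (Q := QQ n x s); set (A := Qa n x s); set (B := Qs n x s).
  match goal with |- 0 <= ?e => assert (E : e = Q*Q*((Q + 2*s*B)*(Q + 2*s*B) + s*(A*A))) end.
  { unfold s. clearbody Q A B. field. }
  rewrite E.
  assert (0 <= s) by (unfold s; nra).
  clearbody s Q A B. apply Rmult_le_pos; [apply Rle_0_sqr|]. apply Rplus_le_le_0_compat; [apply Rle_0_sqr|]. apply Rmult_le_pos; [assumption|apply Rle_0_sqr].
Qed.
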